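(* For every $k\geq 2$, with $n=2^k$, every cancellation-free linear circuit that computes the $n\times n$ Sierpinski gasket matrix $S_k$ has size at least $\frac{1}{2}n\log_2 n$.
   Context: The Sierpinski gasket matrices are defined by $S_0=(1)$ and $S_{k+1}=\begin{pmatrix}S_k&0\\S_k&S_k\end{pmatrix}$ (a $2^k\times 2^k$ matrix over $\mathbb{F}_2$). A linear circuit over $\mathbb{F}_2$ with inputs $x_1,\ldots,x_n$ is a directed acyclic graph whose in-degree-0 nodes are the inputs and whose other nodes (gates) have in-degree 2 and compute the XOR of their two children; $n$ nodes are designated as outputs $y_1,\ldots,y_n$, and the circuit computes $A$ if $\mathbf{y}=A\mathbf{x}$ for all $\mathbf{x}\in\mathbb{F}_2^n$. The size is the number of gates. The value vector $\kappa(u)\in\mathbb{F}_2^n$ of a node $u$ has $\kappa(u)_i=1$ iff $x_i$ occurs in the parity computed at $u$. A linear circuit is cancellation-free if whenever there is a directed path from a node $w$ to a node $u$, $\kappa(u)\geq\kappa(w)$ coordinatewise. *)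

(* Defs.v *)
From mathcomp Require Import all_boot all_order all_algebra.
Set Implicit Arguments. Unset Strict Implicit. Unset Printing Implicit Defensive.
Import GRing.Theory.
Local Open Scope ring_scope.

Lemma pow2S_add (k : nat) : (2 ^ k + 2 ^ k = 2 ^ k.+1)%N.
Proof. by rewrite expnS mul2n addnn. Qed.

Fixpoint sierpinski (k : nat) : 'M['F_2]_(2 ^ k) :=
  match k with
  | 0 => 1%:M
  | k'.+1 => castmx (pow2S_add k', pow2S_add k')
               (block_mx (sierpinski k') 0 (sierpinski k') (sierpinski k'))
  end.

(* Nodes are natural numbers
   v < n + csize C: nodes 0..n-1 are the inputs x_1..x_n (node j is x_{j+1});
   node n+i (i < csize C) is the i-th gate, with two distinct children
   cleft i, cright i, both < n+i (a topological numbering of the DAG;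
   every DAG admits one).  cout j is the node designated as output y_{j+1}. *)
Record lcircuit (n : nat) := LCircuit {
  csize : nat;
  cleft : nat -> nat;
  cright : nat -> nat;
  cout : 'I_n -> nat
}.

Definition wf_circuit n (C : lcircuit n) : Prop :=
  (forall i, (i < csize C)%N ->
     [/\ (cleft C i < n + i)%N, (cright C i < n + i)%N & cleft C i != cright C i])
  /\ (forall j, (cout C j < n + csize C)%N).

(* value vectors kappa(v) in F_2^n, as boolean vectors *)
Fixpoint kappa_aux n (C : lcircuit n) (fuel v : nat) : 'I_n -> bool :=
  match fuel with
  | 0 => fun j : 'I_n => v == nat_of_ord j
  | f.+1 => if (v < n)%N then fun j : 'I_n => v == nat_of_ord j
            else fun j : 'I_n => xorb (kappa_aux C f (cleft C (v - n)%N) j)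
                               (kappa_aux C f (cright C (v - n)%N) j)
  end.

(* children of a node have strictly smaller index, so fuel v.+1 suffices *)
Definition kappa n (C : lcircuit n) (v : nat) : 'I_n -> bool :=
  kappa_aux C v.+1 v.

Definition cedge n (C : lcircuit n) (w u : nat) : bool :=
  [&& (n <= u)%N, (u < n + csize C)%N &
      (w == cleft C (u - n)%N) || (w == cright C (u - n)%N)].

Inductive creach n (C : lcircuit n) : nat -> nat -> Prop :=
  | creach_refl w : creach C w w
  | creach_step w u v : creach C w u -> cedge C u v -> creach C w v.

Definition cancellation_free n (C : lcircuit n) : Prop :=
  forall w u, creach C w u -> forall j, (kappa C w j ==> kappa C u j).

Definition computes n (C : lcircuit n) (A : 'M['F_2]_n) : Prop :=
  forall i j, A i j = (kappa C (cout C i) j : nat)%:R.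

(* Main.v *)
Require Import Defs.
From mathcomp Require Import all_boot all_order all_algebra.
From mathcomp Require Import zify.
Set Implicit Arguments. Unset Strict Implicit. Unset Printing Implicit Defensive.

Lemma kappa_auxE n (C : lcircuit n) : wf_circuit C -> forall f f' v j,
  (v < f)%N -> (v < f')%N -> (v < n + csize C)%N ->
  kappa_aux C f v j = kappa_aux C f' v j.
Proof.
move=> [wfg wfo]; elim=> [|f IH] [|f'] v j //= hf hf' hv.
case: ifP => // hvn.
have hg : (v - n < csize C)%N by lia.
have [hl hr _] := wfg _ hg.
have hvn' : n + (v - n) = v by lia.
rewrite hvn' in hl hr.
rewrite (IH f') ?(IH f' (cright C (v - n))) //; lia.
Qed.

Lemma kappa_in n (C : lcircuit n) v j : (v < n)%N -> kappa C v j = (v == j).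
Proof. by move=> h; rewrite /kappa /= h. Qed.

Lemma kappa_gate n (C : lcircuit n) g j : wf_circuit C -> (g < csize C)%N ->
  kappa C (n + g) j = xorb (kappa C (cleft C g) j) (kappa C (cright C g) j).
Proof.
move=> wf hg; have [wfg _] := wf; have [hl hr _] := wfg _ hg.
rewrite /kappa /= ltnNge leq_addr /= addKn.
rewrite (kappa_auxE wf (f := n + g) (f' := (cleft C g).+1)) //; last by lia.
rewrite (kappa_auxE wf (f := n + g) (f' := (cright C g).+1)) //; lia.
Qed.

Lemma edge_left n (C : lcircuit n) g : (g < csize C)%N -> cedge C (cleft C g) (n + g).
Proof. by move=> hg; rewrite /cedge leq_addr ltn_add2l hg addKn eqxx. Qed.
Lemma edge_right n (C : lcircuit n) g : (g < csize C)%N -> cedge C (cright C g) (n + g).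
Proof. by move=> hg; rewrite /cedge leq_addr ltn_add2l hg addKn eqxx orbT. Qed.

Lemma reach_of_kappa n (C : lcircuit n) : wf_circuit C -> forall u,
  (u < n + csize C)%N -> forall j, kappa C u j -> creach C j u.
Proof.
move=> wf; elim/ltn_ind => u IH hu j.
case: (ltnP u n) => hun.
  by rewrite kappa_in // => /eqP ->; apply: creach_refl.
have hg : (u - n < csize C)%N by lia.
have hu' : u = n + (u - n) by lia.
have [wfg _] := wf; have [hl hr _] := wfg _ hg.
rewrite hu' kappa_gate //.
case hL: (kappa C (cleft C (u - n)) j) => /= hR.
  apply: creach_step (edge_left hg); apply: IH => //; lia.
apply: creach_step (edge_right hg); apply: IH => //; lia.
Qed.

Lemma creach_cross n (C : lcircuit n) (P : nat -> bool) w v : creach C w v ->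
  ~~ P w -> P v -> exists u u', [/\ creach C w u, ~~ P u, cedge C u u', P u' & creach C u' v].
Proof.
elim => [x|x y z Hxy IH Hyz] Hw Hv.
  by rewrite Hv in Hw.
case Py: (P y).
  have [u [u' [h1 h2 h3 h4 h5]]] := IH Hw Py.
  by exists u, u'; split => //; apply: creach_step h5 Hyz.
by exists y, z; split => //; [rewrite Py | apply: creach_refl].
Qed.

Fixpoint sgsub (m i j : nat) : bool :=
  match m with
  | 0 => true
  | m'.+1 => if (i < 2 ^ m')%N then (j < 2 ^ m')%N && sgsub m' i j
             else if (j < 2 ^ m')%N then sgsub m' (i - 2 ^ m') j
             else sgsub m' (i - 2 ^ m') (j - 2 ^ m')
  end.

Lemma sgLL m i j : (i < 2 ^ m)%N -> (j < 2 ^ m)%N -> sgsub m.+1 i j = sgsub m i j.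
Proof. by move=> hi hj /=; rewrite hi hj. Qed.
Lemma sgLR m i j : (i < 2 ^ m)%N -> sgsub m.+1 i (j + 2 ^ m) = false.
Proof. by move=> hi /=; rewrite hi ltnNge leq_addl. Qed.
Lemma sgRL m i j : (j < 2 ^ m)%N -> sgsub m.+1 (i + 2 ^ m) j = sgsub m i j.
Proof. by move=> hj /=; rewrite ltnNge leq_addl /= hj addnK. Qed.
Lemma sgRR m i j : sgsub m.+1 (i + 2 ^ m) (j + 2 ^ m) = sgsub m i j.
Proof. by rewrite /= !ltnNge !leq_addl /= !addnK. Qed.

Lemma sgsub_refl m i : (i < 2 ^ m)%N -> sgsub m i i.
Proof.
elim: m i => [|m IH] i hi //=.
case: ifP => [h|h]; first by rewrite h IH.
rewrite h IH //; rewrite expnS in hi; move/negbT: h; lia.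
Qed.

Lemma sgsub_anti m i j : (i < 2 ^ m)%N -> (j < 2 ^ m)%N -> sgsub m i j -> sgsub m j i -> i = j.
Proof.
elim: m i j => [|m IH] i j hi hj /=; first by rewrite expn0 in hi hj; lia.
rewrite expnS in hi hj.
case: ifP => h1; case: ifP => h2 //=.
- by apply: IH.
- move/negbT: h1 => h1; move/negbT: h2 => h2.
  move=> a b; have e := IH (i - 2 ^ m) (j - 2 ^ m).
  have : i - 2 ^ m = j - 2 ^ m by apply: e => //; lia.
  lia.
Qed.
Section Part2S.
Import GRing.Theory.
Local Open Scope ring_scope.

Lemma sierp_sub k (i j : 'I_(2 ^ k)) : sierpinski k i j = (sgsub k i j : nat)%:R.
Proof.
elim: k i j => [|k IH] i j.
  rewrite /= mxE.
  have hi : (i < 1)%N := ltn_ord i; have hj : (j < 1)%N := ltn_ord j.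
  have -> : i == j by apply/eqP/val_inj => /=; lia.
  by [].
rewrite /= castmxE.
set i' := cast_ord _ i; set j' := cast_ord _ j.
have ei : nat_of_ord i' = i by [].
have ej : nat_of_ord j' = j by [].
case: (splitP i') => [a ea|a ea]; case: (splitP j') => [b eb|b eb].
- have -> : i' = lshift _ a by apply/val_inj.
  have -> : j' = lshift _ b by apply/val_inj.
  by rewrite block_mxEul IH -ei -ej ea eb.
- have -> : i' = lshift _ a by apply/val_inj.
  have -> : j' = rshift _ b by apply/val_inj.
  by rewrite block_mxEur mxE.
- have -> : i' = rshift _ a by apply/val_inj.
  have -> : j' = lshift _ b by apply/val_inj.
  by rewrite block_mxEdl IH -ei -ej ea eb addKn.
- have -> : i' = rshift _ a by apply/val_inj.
  have -> : j' = rshift _ b by apply/val_inj.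
  by rewrite block_mxEdr IH -ei -ej ea eb !addKn.
Qed.
End Part2S.

Definition hitsm n (C : lcircuit n) m (X : nat -> 'I_n) v : bool :=
  [exists j : 'I_(2 ^ m), kappa C v (X j)].
Definition essm n (C : lcircuit n) m (X : nat -> 'I_n) (g : 'I_(csize C)) : bool :=
  hitsm C m X (cleft C g) && hitsm C m X (cright C g).
Definition belowm n (C : lcircuit n) m (O : nat -> nat) (g : 'I_(csize C)) : bool :=
  [exists i : 'I_(2 ^ m), [forall j : 'I_n, kappa C (n + g) j ==> kappa C (O i) j]].
Arguments essm {n} C m X g.
Arguments belowm {n} C m O g.
Definition Gset n (C : lcircuit n) m (X : nat -> 'I_n) (O : nat -> nat) :=
  [set g : 'I_(csize C) | essm C m X g && belowm C m O g].
Definition Inst n (C : lcircuit n) m (X : nat -> 'I_n) (O : nat -> nat) : Prop :=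
  (forall i, (i < 2 ^ m)%N -> (O i < n + csize C)%N) /\
  (forall i j, (i < 2 ^ m)%N -> (j < 2 ^ m)%N -> kappa C (O i) (X j) = sgsub m i j).

Lemma hits_of n (C : lcircuit n) m X v j : (j < 2 ^ m)%N -> kappa C v (X j) -> hitsm C m X v.
Proof. by move=> hj k; apply/existsP; exists (Ordinal hj). Qed.

Lemma hits_mono n (C : lcircuit n) m m' X (f : nat -> nat) v :
  (forall j, (j < 2 ^ m)%N -> (f j < 2 ^ m')%N) ->
  hitsm C m (fun j => X (f j)) v -> hitsm C m' X v.
Proof. by move=> hf /existsP[j kj]; apply: (hits_of (hf _ (ltn_ord j)) kj). Qed.

Lemma below_mono n (C : lcircuit n) m m' O (f : nat -> nat) g :
  (forall j, (j < 2 ^ m)%N -> (f j < 2 ^ m')%N) ->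
  belowm C m (fun i => O (f i)) g -> belowm C m' O g.
Proof.
by move=> hf /existsP[i ki]; apply/existsP; exists (Ordinal (hf _ (ltn_ord i))).
Qed.

Lemma edge_kappa n (C : lcircuit n) u v j : cancellation_free C -> cedge C u v ->
  kappa C u j -> kappa C v j.
Proof.
move=> cf e; apply/implyP/cf; apply: creach_step e; apply: creach_refl.
Qed.

Lemma main_ind n (C : lcircuit n) : wf_circuit C -> cancellation_free C ->
  forall m X O, Inst C m X O -> (m * 2 ^ m <= 2 * #|Gset C m X O|)%N.
Proof.
move=> wf cf; elim=> [|m IH] X O [hO hk]; first by rewrite mul0n.
have eh : 2 ^ m.+1 = 2 ^ m + 2 ^ m by rewrite expnS mul2n addnn.
rewrite eh in hO hk *.
set h := 2 ^ m in eh hO hk *.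
pose X1 := fun j => X (j + h). pose O1 := fun i => O (i + h).
have I0 : Inst C m X O.
  split => [i hi|i j hi hj]; [apply: hO; lia | rewrite hk ?sgLL //; lia].
have I1 : Inst C m X1 O1.
  split => [i hi|i j hi hj]; [apply: hO; lia | rewrite /X1 /O1 hk ?sgRR //; lia].
have noX1 : forall g, belowm C m O g -> forall j, (j < h)%N -> ~~ kappa C (n + g) (X (j + h)).
  move=> g /existsP[i /forallP hs] j hj; apply/negP => kg.
  have := implyP (hs (X (j + h))) kg.
  have hi := ltn_ord i; rewrite hk ?sgLR //; lia.
set G1 := Gset C m X O. set G2 := Gset C m X1 O1.
set G3 := [set g in Gset C m.+1 X O | hitsm C m X1 (n + g) && ~~ essm C m X1 g].
have hid : forall j, (j < 2 ^ m)%N -> (id j < 2 ^ m.+1)%N by move=> j; rewrite /= eh; lia.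
have hsh : forall j, (j < 2 ^ m)%N -> (j + h < 2 ^ m.+1)%N by move=> j; rewrite /= eh; lia.
have s1 : G1 \subset Gset C m.+1 X O.
  apply/subsetP => g; rewrite !inE /essm => /andP[/andP[a b] c].
  by rewrite (hits_mono hid a) (hits_mono hid b) (below_mono hid c).
have s2 : G2 \subset Gset C m.+1 X O.
  apply/subsetP => g; rewrite !inE /essm => /andP[/andP[a b] c].
  by rewrite (hits_mono hsh a) (hits_mono hsh b) (below_mono hsh c).
have s3 : G3 \subset Gset C m.+1 X O by apply/subsetP => g; rewrite inE => /andP[].
have d12 : G1 :&: G2 = set0.
  apply/setP => g; rewrite !inE; apply/negbTE/negP => /andP[/andP[_ b1] /andP[/andP[e2 _] _]].
  case/existsP: e2 => j kj.
  have hg := ltn_ord g.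
  have := noX1 g b1 j (ltn_ord j); rewrite (edge_kappa cf (edge_left hg) kj).
  by [].
have d13 : G1 :&: G3 = set0.
  apply/setP => g; rewrite !inE; apply/negbTE/negP => /andP[/andP[_ b1] /andP[_ /andP[e3 _]]].
  case/existsP: e3 => j kj.
  by have := noX1 g b1 j (ltn_ord j); rewrite kj.
have d23 : G2 :&: G3 = set0.
  apply/setP => g; rewrite !inE; apply/negbTE/negP => /andP[/andP[e2 _] /andP[_ /andP[_ ne]]].
  by rewrite e2 in ne.
have c3 : (h <= #|G3|)%N.
  have ex : forall i : 'I_h, exists g : 'I_(csize C),
      (g \in G3) && kappa C (n + g) (X i) &&
      [forall j : 'I_n, kappa C (n + g) j ==> kappa C (O (i + h)) j].
    move=> i; have hi := ltn_ord i.
    have kO : kappa C (O (i + h)) (X i) by rewrite hk; [rewrite sgRL //; exact: sgsub_refl hi | lia | lia].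
    have r := reach_of_kappa wf (hO (i + h) ltac:(lia)) kO.
    have nX : ~~ hitsm C m X1 (X i).
      apply/existsP => -[j kj].
      rewrite kappa_in // in kj.
      have e : X i = X (j + h) by apply/val_inj/eqP.
      have hj := ltn_ord j.
      have := hk i i; have := hk i (j + h).
      rewrite -e sgLR // sgLL // sgsub_refl // => -> //; lia.
    have yO : hitsm C m X1 (O (i + h)).
      by apply: (hits_of hi); rewrite /X1 hk ?sgRR ?sgsub_refl //; lia.
    have [u [u' [r1 nu e hu' r2]]] := creach_cross r nX yO.
    have e0 := e; move: e; rewrite /cedge => /and3P [hn hs hc].
    have hg : (u' - n < csize C)%N by lia.
    have eu' : n + (u' - n) = u' by lia.
    exists (Ordinal hg) => /=.
    have kii : kappa C (X i) (X i) by rewrite kappa_in.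
    have ku : kappa C u (X i) := implyP (cf _ _ r1 (X i)) kii.
    have su : forall j, kappa C u' j ==> kappa C (O (i + h)) j := cf _ _ r2.
    case/existsP: hu' => j1 kj1.
    have hj1 := ltn_ord j1.
    have nu1 : kappa C u (X (j1 + h)) = false.
      by apply/negbTE/negP => k; apply: (negP nu); apply: (hits_of hj1).
    have kg : kappa C u' (X i) := edge_kappa cf e0 ku.
    have e1 := kappa_gate (X (j1 + h)) wf hg; rewrite eu' in e1.
    move: (kj1); rewrite /X1 e1 => kx.
    have hb : [exists i0 : 'I_(2 ^ m.+1), [forall j, kappa C (n + (u' - n)) j ==> kappa C (O i0) j]].
      by apply/existsP; exists (Ordinal (hsh _ hi)); rewrite eu'; apply/forallP.
    have hy : hitsm C m X1 u' by apply/existsP; exists j1.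
    have hb' : belowm C m.+1 O (Ordinal hg) := hb.
    rewrite !inE eu' kg /= andbT; apply/andP; split; last by apply/forallP.
    rewrite hb' hy /essm andbT /=.
    case/orP: hc => /eqP eu; rewrite -eu in kx *; rewrite nu1 /= ?Bool.xorb_false_r in kx.
    - by rewrite (hits_of (j := i) (hid _ hi) ku) (hits_of (j := j1 + h) (hsh _ hj1) kx) (negbTE nu).
    - by rewrite (hits_of (j := i) (hid _ hi) ku) (hits_of (j := j1 + h) (hsh _ hj1) kx) (negbTE nu) andbF.
  have [f hf] := fin_all_exists ex.
  have finj : injective f.
    move=> i i' e.
    have := hf i; have := hf i'; rewrite e.
    move=> /andP[/andP[_ k'] s'] /andP[/andP[_ k] s].
    have a := implyP (forallP s (X i')) k'.
    have b := implyP (forallP s' (X i)) k.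
    have hi := ltn_ord i; have hi' := ltn_ord i'.
    rewrite hk ?sgRL // in a; try lia.
    rewrite hk ?sgRL // in b; try lia.
    by apply/val_inj; apply: (sgsub_anti hi hi').
  have : (#|[set f x | x : 'I_h]| <= #|G3|)%N.
    apply: subset_leq_card; apply/subsetP => g /imsetP [x _ ->].
    by have /andP[/andP[] ] := hf x.
  by rewrite card_imset // card_ord.
have cU : #|G1 :|: G2 :|: G3| = (#|G1| + #|G2| + #|G3|)%N.
  have := cardsUI (G1 :|: G2) G3; rewrite setIUl d13 d23 setU0 cards0 addn0 => ->.
  by have := cardsUI G1 G2; rewrite d12 cards0 addn0 => ->.
have cG : (#|G1 :|: G2 :|: G3| <= #|Gset C m.+1 X O|)%N.
  by apply: subset_leq_card; rewrite !subUset s1 s2 s3.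
have i1 := IH X O I0. have i2 := IH X1 O1 I1.
rewrite -/G1 in i1; rewrite -/G2 in i2.
rewrite cU in cG.
nia.
Qed.

Lemma b2F2 (a b : bool) : ((a : nat)%:R = (b : nat)%:R :> 'F_2)%R -> a = b.
Proof. by case: a; case: b. Qed.

Theorem theorem4 (k : nat) : (2 <= k)%N ->
  forall C : lcircuit (2 ^ k),
    wf_circuit C -> cancellation_free C -> computes C (sierpinski k) ->
    (k * 2 ^ k <= 2 * csize C)%N.
Proof.
move=> _ C wf cf comp.
have e : (2 ^ k).-1.+1 = 2 ^ k by rewrite prednK // expn_gt0.
pose X := fun j : nat => cast_ord e (inord j).
pose O := fun i : nat => cout C (X i).
have XE : forall j, (j < 2 ^ k)%N -> nat_of_ord (X j) = j.
  by move=> j hj; rewrite /X /= inordK // e.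
have I : Inst C k X O.
  split => [i hi|i j hi hj]; first by case: wf => _ ho; apply: ho.
  apply: b2F2; rewrite -comp sierp_sub XE ?XE //.
have := main_ind wf cf I.
move/leq_trans; apply.
rewrite leq_mul2l; apply/orP; right; apply: leq_trans (max_card _) _; by rewrite card_ord.
Qed.
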